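(* Fix a diffusion step $i$ with noise levels $\alpha^{x}_i,\alpha^{k}_i\in(0,1)$ and a noisy joint point $y_i=[x_i;k_i]\in\mathbb{R}^{n_x}\times\mathbb{R}^{n_k}$. Let $q(\cdot\mid y_i)$ be the product proposal on clean joint samples $$q(y_0\mid y_i)=p^{x}_{0|i}(x_0\mid x_i)\,q^{k}(k_0\mid k_i),\qquad q^{k}(k_0\mid k_i)=\mathcal N\!\Big(k_0;\ (\alpha^{k}_i)^{-1/2}k_i,\ \big(\tfrac{1}{\alpha^{k}_i}-1\big)I\Big).$$ Assume $0<\mathbb{E}_{\hat y_0\sim q(\cdot\mid y_i)}[V(\hat x_0,\hat k_0)\,p^{k}_0(\hat k_0)]<\infty$, and that all integrals below are finite and differentiation under the integral sign with respect to $y_i$ is permitted. Then the score of the noisy joint marginal satisfies $$\nabla_{y_i}\log p_i(y_i)=\frac{\mathbb{E}_{\hat y_0\sim q(\cdot\mid y_i)}\big[s_{\alpha^{y}_i}(\hat y_0\mid y_i)\,V(\hat x_0,\hat k_0)\,p^{k}_0(\hat k_0)\big]}{\mathbb{E}_{\hat y_0\sim q(\cdot\mid y_i)}\big[V(\hat x_0,\hat k_0)\,p^{k}_0(\hat k_0)\big]},$$ where $\hat y_0=[\hat x_0;\hat k_0]$.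
   Context: Let $p^{x}_0$ be a probability density on $\mathbb{R}^{n_x}$ (the model-free/diffusion data distribution), $p^{k}_0$ a probability density on $\mathbb{R}^{n_k}$ (the model-based prior), and $V:\mathbb{R}^{n_x}\times\mathbb{R}^{n_k}\to\mathbb{R}_{\ge 0}$ a measurable ''interaction potential'' such that $Z=\int p^{x}_0(x)p^{k}_0(k)V(x,k)\,dx\,dk\in(0,\infty)$. The clean joint density is $p_0(y_0)=Z^{-1}p^{x}_0(x_0)p^{k}_0(k_0)V(x_0,k_0)$ for $y_0=[x_0;k_0]$. For noise levels $\alpha^{x}_i,\alpha^{k}_i\in(0,1)$ write $\alpha^{y}_i=[\alpha^{x}_i;\alpha^{k}_i]$ and define the joint forward kernel as the product Gaussian $$p_{\alpha^{y}_i}(y_i\mid y_0)=\mathcal N\big(x_i;\sqrt{\alpha^{x}_i}x_0,(1-\alpha^{x}_i)I\big)\,\mathcal N\big(k_i;\sqrt{\alpha^{k}_i}k_0,(1-\alpha^{k}_i)I\big),$$ with the $x$-factor denoted $p^{x}_{\alpha^{x}_i}(x_i\mid x_0)$. The noisy joint marginal is $p_i(y_i)=\int p_{\alpha^{y}_i}(y_i\mid y_0)p_0(y_0)\,dy_0$. The model-free noisy marginal is $p^{x}_i(x_i)=\int p^{x}_{\alpha^{x}_i}(x_i\mid x_0)p^{x}_0(x_0)\,dx_0$ and the model-free denoising posterior is $p^{x}_{0|i}(x_0\mid x_i)=p^{x}_{\alpha^{x}_i}(x_i\mid x_0)p^{x}_0(x_0)/p^{x}_i(x_i)$. The (Tweedie)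 score of the forward kernel is $s_{\alpha^{y}_i}(y_0\mid y_i)=\nabla_{y_i}\log p_{\alpha^{y}_i}(y_i\mid y_0)$, i.e. the vector with $x$-block $-\frac{x_i-\sqrt{\alpha^{x}_i}x_0}{1-\alpha^{x}_i}$ and $k$-block $-\frac{k_i-\sqrt{\alpha^{k}_i}k_0}{1-\alpha^{k}_i}$. *)

(* Defs.v *)
From HB Require Import structures.
From mathcomp Require Import all_boot all_order all_algebra.
From mathcomp Require Import all_classical all_reals all_analysis.
Set Implicit Arguments. Unset Strict Implicit. Unset Printing Implicit Defensive.
Import Order.TTheory GRing.Theory Num.Theory.
Import numFieldNormedType.Exports.
Local Open Scope classical_set_scope.
Local Open Scope ring_scope.

(* R^n is represented by n.-tuple R, with the product sigma-algebra generated
   by the coordinate projections (the library's canonical measurable structure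
   on tuples, which coincides with the Borel sigma-algebra of R^n). *)
Notation Rn R n := (n.-tuple (measurableTypeR R)).

Fixpoint lebesgue_n (R : realType) (n : nat) : set (Rn R n) -> \bar R :=
  match n return set (Rn R n) -> \bar R with
  | 0 => fun A => \d_([tuple] : Rn R 0) A
  | n'.+1 => pushforward ((@lebesgue_measure R) \x (@lebesgue_n R n'))%E
               (fun p : measurableTypeR R * Rn R n' => [tuple of p.1 :: p.2])
  end.

Definition lebesgue_joint (R : realType) (nx nk : nat)
  : set (Rn R nx * Rn R nk) -> \bar R :=
  ((@lebesgue_n R nx) \x (@lebesgue_n R nk))%E.

Section defs.
Context (R : realType).

(* real-valued integral (same definition as the library's Rintegral, but for
   an arbitrary set function, since lebesgue_n is defined as a set function) *)
Definition Rinteg d (T : measurableType d) (mu : set T -> \bar R) (f : T -> R) : R :=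
  fine (\int[mu]_x (f x)%:E)%E.

Definition sqdist n (z m : Rn R n) : R :=
  \sum_(i < n) (tnth z i - tnth m i) ^+ 2.

Definition scale_tuple n (c : R) (z : Rn R n) : Rn R n :=
  [tuple c * tnth z i | i < n].

Definition gauss n (m : Rn R n) (v : R) (z : Rn R n) : R :=
  (Num.sqrt (2 * pi * v)) ^- n * expR (- sqdist z m / (2 * v)).

Definition fwd n (a : R) (zi z0 : Rn R n) : R :=
  gauss (scale_tuple (Num.sqrt a) z0) (1 - a) zi.

Definition shift n (z : Rn R n) (j : 'I_n) (t : R) : Rn R n :=
  [tuple (if i == j then tnth z i + t else tnth z i) | i < n].

Definition dx nx nk (f : Rn R nx * Rn R nk -> R) (y : Rn R nx * Rn R nk)
  (j : 'I_nx) : R := derive1 (fun t => f (shift y.1 j t, y.2)) 0.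
Definition dk nx nk (f : Rn R nx * Rn R nk -> R) (y : Rn R nx * Rn R nk)
  (j : 'I_nk) : R := derive1 (fun t => f (y.1, shift y.2 j t)) 0.
Definition derivable_x nx nk (f : Rn R nx * Rn R nk -> R) y (j : 'I_nx) :=
  derivable (fun t => f (shift y.1 j t, y.2)) 0 1.
Definition derivable_k nx nk (f : Rn R nx * Rn R nk -> R) y (j : 'I_nk) :=
  derivable (fun t => f (y.1, shift y.2 j t)) 0 1.

Variables (nx nk : nat).
Variables (px0 : Rn R nx -> R) (pk0 : Rn R nk -> R)
          (V : Rn R nx -> Rn R nk -> R).
Variables (ax ak : R).

Definition Zc : \bar R :=
  (\int[@lebesgue_joint R nx nk]_y0 (px0 y0.1 * pk0 y0.2 * V y0.1 y0.2)%:E)%E.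

Definition p0 (y0 : Rn R nx * Rn R nk) : R :=
  px0 y0.1 * pk0 y0.2 * V y0.1 y0.2 / fine Zc.

Definition fwd_joint (yi y0 : Rn R nx * Rn R nk) : R :=
  fwd ax yi.1 y0.1 * fwd ak yi.2 y0.2.

Definition p_i (yi : Rn R nx * Rn R nk) : R :=
  Rinteg (@lebesgue_joint R nx nk) (fun y0 => fwd_joint yi y0 * p0 y0).

Definition px_i (xi : Rn R nx) : R :=
  Rinteg (@lebesgue_n R nx) (fun x0 => fwd ax xi x0 * px0 x0).
Definition px_post (x0 xi : Rn R nx) : R :=
  fwd ax xi x0 * px0 x0 / px_i xi.

Definition qk (k0 ki : Rn R nk) : R :=
  gauss (scale_tuple (Num.sqrt ak)^-1 ki) (ak^-1 - 1) k0.

Definition q (y0 yi : Rn R nx * Rn R nk) : R :=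
  px_post y0.1 yi.1 * qk y0.2 yi.2.

Definition Eq_q (yi : Rn R nx * Rn R nk) (g : Rn R nx * Rn R nk -> R) : R :=
  Rinteg (@lebesgue_joint R nx nk) (fun y0 => q y0 yi * g y0).

Definition score_x (y0 yi : Rn R nx * Rn R nk) (j : 'I_nx) : R :=
  - (tnth yi.1 j - Num.sqrt ax * tnth y0.1 j) / (1 - ax).
Definition score_k (y0 yi : Rn R nx * Rn R nk) (j : 'I_nk) : R :=
  - (tnth yi.2 j - Num.sqrt ak * tnth y0.2 j) / (1 - ak).

Definition wVk (y0 : Rn R nx * Rn R nk) : R := V y0.1 y0.2 * pk0 y0.2.

End defs.

(* Main.v *)
Require Import Defs.
From HB Require Import structures.
From mathcomp Require Import all_boot all_order all_algebra.
From mathcomp Require Import all_classical all_reals all_analysis.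
Import Order.TTheory GRing.Theory Num.Theory.
Import numFieldNormedType.Exports.
Local Open Scope classical_set_scope.
Local Open Scope ring_scope.
Local Open Scope ereal_scope.
Lemma pmuleD (R : realType) (c : R) (a b : \bar R) : (0 < c)%R ->
  c%:E * (a + b) = c%:E * a + c%:E * b.
Proof.
move=> c0.
have Hy : c%:E * +oo = +oo by rewrite mulry gtr0_sg // mul1e.
have HNy : c%:E * -oo = -oo by rewrite mulrNy gtr0_sg // mul1e.
case: a => [a| |]; case: b => [b| |] //=; rewrite ?Hy ?HNy //.
all: try by rewrite -?EFinD -!EFinM ?mulrDr.
Qed.

Lemma pmule_sum (R : realType) (I : Type) (s : seq I) (c : R) (P : pred I) (F : I -> \bar R) :
  (0 < c)%R -> c%:E * (\sum_(i <- s | P i) F i) = \sum_(i <- s | P i) c%:E * F i.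
Proof.
move=> c0; apply: (big_morph (fun x => c%:E * x)).
- by move=> x y; exact: pmuleD.
- exact: mule0.
Qed.

Lemma pmule_fsumr (R : realType) (T : choiceType) (c : R) (F : T -> \bar R) (P : set T) :
  (0 < c)%R -> c%:E * (\sum_(i \in P) F i) = \sum_(i \in P) c%:E * F i.
Proof.
move=> c0.
have x0 : c%:E != 0 by rewrite eqe gt_eqF.
rewrite pmule_sum//; apply: finmap.eq_fbigl => y.
rewrite !unlock.
suff -> : (P `&` [eta F] @^-1` [set~ 0%R]) = (P `&` (fun i : T => c%:E * F i) @^-1` [set~ 0%R]) by [].
apply/seteqP; rewrite /preimage; split=> [|] z/= [Pz Fz0];
  split=> //; apply: contra_not Fz0.
by move=> /eqP; rewrite mule_eq0 (negbTE x0)/= => /eqP.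
by move=> ->; rewrite mule0.
Qed.

Lemma sintegral_pscale d (T : measurableType d) (R : realType)
   (mu : set T -> \bar R) (c : R) (h : T -> R) : (0 < c)%R ->
  sintegral mu (cst c \* h)%R = c%:E * sintegral mu h.
Proof.
move=> c0; have cn0 : c != 0%R by rewrite gt_eqF.
rewrite !sintegralET pmule_fsumr//.
rewrite (reindex_fsbigT ( *%R c))/=; last first.
  by exists ( *%R c^-1); [exact: mulKf|exact: mulVKf].
by apply: eq_fsbigr => x; rewrite preimage_cstM// [(_ / c)%R]mulrC mulKf// muleA.
Qed.
Local Close Scope ereal_scope.
Section scal.
Local Open Scope ereal_scope.
Context d (T : measurableType d) (R : realType) (mu : set T -> \bar R).
Import HBNNSimple.

Definition nnint (f : T -> \bar R) :=
  ereal_sup [set sintegral mu (HBNNSimple.NonNegSimpleFun.sort h) |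
    h in [set h : {nnsfun T >-> R} | forall x, ((h x)%:E <= f x)]].

Lemma nnint_pscale (c : R) (f : T -> \bar R) : (0 < c)%R ->
  nnint (fun x => c%:E * f x) = c%:E * nnint f.
Proof.
move=> c0; have cn0 : c != 0%R by rewrite gt_eqF.
rewrite /nnint -ereal_sup_pZl //; congr ereal_sup; apply/seteqP; split.
- move=> _ [h hle <-].
  have ci0 : (0 <= c^-1)%R by rewrite invr_ge0 ltW.
  exists (sintegral mu (scale_nnsfun h ci0)).
    exists (scale_nnsfun h ci0) => // x /=.
    rewrite EFinM -(@lee_pmul2l _ c%:E) ?lte_fin // muleA -EFinM divff // mul1r.
    exact: hle.
  rewrite (_ : sintegral mu (scale_nnsfun h ci0) = sintegral mu (cst c^-1 \* h)%R) //.
  by rewrite sintegral_pscale ?invr_gt0 // muleA -EFinM divff // mul1e.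
- move=> _ [_ [h hle <-] <-].
  have c0' : (0 <= c)%R by rewrite ltW.
  exists (scale_nnsfun h c0') => /=.
    by move=> x /=; rewrite EFinM lee_pmul2l ?lte_fin //; exact: hle.
  rewrite (_ : sintegral mu (scale_nnsfun h c0') = sintegral mu (cst c \* h)%R) //.
  by rewrite sintegral_pscale.
Qed.

Lemma integral_pscale (c : R) (D : set T) (f : T -> \bar R) : (0 < c)%R ->
  \int[mu]_(x in D) (c%:E * f x) = c%:E * \int[mu]_(x in D) f x.
Proof.
move=> c0.
have E : (fun x => c%:E * f x) \_ D = (fun x => c%:E * (f \_ D) x).
  by apply: boolp.funext => x; rewrite !patchE; case: ifP => // _; rewrite mule0.
rewrite /integral E ge0_funeposM ?ge0_funenegM ?ltW //.
rewrite -/(nnint _) -/(nnint _) -/(nnint _) -/(nnint _).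
rewrite !nnint_pscale // pmuleD // muleN //.
Qed.
End scal.
Arguments nnint {d T R}.
Section nonneg.
Local Open Scope ereal_scope.
Context d (T : measurableType d) (R : realType) (mu : set T -> \bar R).
Import HBNNSimple.
Hypothesis mu0 : mu set0 = 0.

Lemma sintegral_cst0 : sintegral mu (cst 0%R) = 0.
Proof.
rewrite sintegralET fsbig1// => r _; rewrite preimage_cst.
by case: ifPn => [/[!inE] <-|]; rewrite ?mul0e// mu0 mule0.
Qed.

Lemma integral_ge0_gen (f : T -> \bar R) : (forall x, 0 <= f x) ->
  0 <= \int[mu]_(x in setT) f x.
Proof.
move=> f0.
have E : f \_ setT = f by apply: boolp.funext => x; rewrite patchE in_setT.
rewrite /integral E -/(nnint mu _) -/(nnint mu _).
have En : f^\- = (fun _ => 0).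
  by apply: boolp.funext => x; rewrite funenegE; apply/max_idPr; rewrite oppe_le0.
rewrite En.
have -> : nnint mu (fun _ => 0) = 0.
  rewrite /nnint.
  have -> : [set sintegral mu (HBNNSimple.NonNegSimpleFun.sort h) |
    h in [set h : {nnsfun T >-> R} | forall x, ((h x)%:E <= (fun _ => 0) x)]] = [set 0].
    apply/seteqP; split.
    - move=> _ [h hle <-] /=.
      rewrite (eq_sintegral (cst 0%R)) ?sintegral_cst0 // => x /=.
      by apply/eqP; rewrite eq_le -lee_fin hle /= fun_ge0.
    - move=> _ ->; exists nnsfun0 => //=.
      by rewrite (eq_sintegral (cst 0%R)) ?sintegral_cst0.
  by rewrite ereal_sup1.
rewrite sube0 /nnint.
apply: le_ereal_sup_tmp; exists 0 => //=.
exists nnsfun0 => //=.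
  by move=> x; exact: funepos_ge0.
by rewrite (eq_sintegral (cst 0%R)) ?sintegral_cst0.
Qed.
End nonneg.
Lemma lebesgue_n0 (R : realType) (n : nat) : @lebesgue_n R n set0 = 0%E.
Proof.
elim: n => [|n IH] /=.
  by rewrite /dirac indicE in_set0.
rewrite /pushforward preimage_set0 /product_measure1.
under eq_integral do rewrite /= xsection0 IH.
by rewrite integral0.
Qed.
From mathcomp Require Import ring lra.

Lemma derive1_of (R : realType) (f : R -> R) (x df : R) :
  is_derive x 1 f df -> derive1 f x = df.
Proof. by case=> _ <-; rewrite derive1E. Qed.

Lemma derivable_of (R : realType) (f : R -> R) (x df : R) :
  is_derive x 1 f df -> derivable f x 1.
Proof. by case. Qed.

Lemma ln_derive (R : realType) (f : R -> R) :
  derivable f 0 1 -> 0 < f 0 ->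
  derivable (fun t => ln (f t)) 0 1 /\
  derive1 (fun t => ln (f t)) 0 = derive1 f 0 / f 0.
Proof.
move=> df fpos.
have Hf : is_derive (0:R) 1 f ('D_1 f 0) by apply: derivableP.
have H := is_derive1_comp (is_derive1_ln fpos) Hf.
split; first by case: H.
case: H => _ E; rewrite !derive1E.
by rewrite (_ : derive (fun t => ln (f t)) 0 1 = derive (@ln R \o f) 0 1) // E mulrC.
Qed.

Lemma shift0 (R : realType) n (z : Rn R n) (j : 'I_n) : Defs.shift z j 0 = z.
Proof.
by apply: eq_from_tnth => i; rewrite tnth_mktuple; case: eqP => // ->; rewrite addr0.
Qed.

Lemma fineZ (R : realType) (c : R) (e : \bar R) : (0 < c) -> fine (c%:E * e)%E = c * fine e.
Proof.
move=> c0; case: e => [e| |] /=; first by [].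
- by rewrite mulry gtr0_sg // mul1e /= mulr0.
- by rewrite mulrNy gtr0_sg // mul1e /= mulr0.
Qed.

Lemma Rinteg_pscale d (T : measurableType d) (R : realType) (mu : set T -> \bar R)
  (c : R) (f : T -> R) : 0 < c ->
  Rinteg mu (fun x => c * f x) = c * Rinteg mu f.
Proof.
move=> c0; rewrite /Rinteg.
rewrite (_ : (fun x => (c * f x)%:E) = fun x => (c%:E * (f x)%:E)%E); last first.
  by apply: boolp.funext => x; rewrite EFinM.
by rewrite integral_pscale // fineZ.
Qed.
Lemma qk_fwd (R : realType) n (ak : R) (k0 ki : Rn R n) : 0 < ak < 1 ->
  qk ak k0 ki = (Num.sqrt ak) ^+ n * fwd ak ki k0.
Proof.
move=> /andP[a0 a1].
set s := Num.sqrt ak.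
have s0 : 0 < s by rewrite sqrtr_gt0.
have sn0 : s != 0 by rewrite gt_eqF.
have Hs2 : ak = s ^+ 2 by rewrite sqr_sqrtr // ltW.
have v0 : 0 <= 2 * pi * (1 - ak) by rewrite mulr_ge0 ?mulr_ge0 ?pi_ge0 ?subr_ge0 ?ltW.
rewrite /qk /fwd /gauss -/s.
have Hsq : sqdist k0 (scale_tuple s^-1 ki) / (2 * (ak^-1 - 1)) =
           sqdist ki (scale_tuple s k0) / (2 * (1 - ak)).
  rewrite /sqdist.
  have -> : \sum_(i < n) ((tnth k0 i : R) - tnth (scale_tuple s^-1 ki) i) ^+ 2 =
            (\sum_(i < n) ((tnth ki i : R) - tnth (scale_tuple s k0) i) ^+ 2) / ak.
    rewrite mulr_suml; apply: eq_bigr => i _; rewrite !tnth_mktuple Hs2.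
    by field.
  rewrite Hs2; field.
  by rewrite sn0 andbT -Hs2 subr_eq0 eq_sym lt_eqF.
have Hn : Num.sqrt (2 * pi * (ak^-1 - 1)) = Num.sqrt (2 * pi * (1 - ak)) / s.
  rewrite -sqrtrV ?ltW // -sqrtrM //; congr Num.sqrt; rewrite Hs2; field.
  by rewrite sn0.
rewrite !mulNr Hsq Hn expr_div_n invf_div mulrA //.
Qed.
Lemma der_quad (R : realType) (a C w K : R) :
  is_derive (0:R) 1 (fun t : R => K * expR (w * - ((a + t)^+2 + C)))
    (K * expR (w * - (a^+2 + C)) * (w * - (2 * a))).
Proof.
have h1 : is_derive (0:R) 1 (fun t : R => a + t) 1.
  have := is_deriveD (is_derive_cst a (0:R) 1) (is_derive_id (0:R) (1:R)).
  by rewrite add0r.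
have h2 : is_derive (0:R) 1 (fun t : R => (a + t)^+2) (2 * a).
  have := is_deriveX 2 h1.
  rewrite addr0 expr1 => H; apply: (is_derive_eq H).
  by rewrite -[(2 * a)%:A]/((2*a) * 1) mulr1.
have h3 : is_derive (0:R) 1 (fun t : R => w * - ((a + t)^+2 + C)) (w * - (2 * a)).
  have := is_deriveZ w (is_deriveN (is_deriveD h2 (is_derive_cst C (0:R) 1))).
  move=> H; apply: (is_derive_eq H).
  by rewrite addr0.
have h4 := is_derive1_comp (is_derive_expR _) h3.
have := is_deriveZ K h4.
move=> H; apply: (is_derive_eq H).
rewrite /= addr0 -[_ *: _]/(K * _) mulrA //.
Qed.

Lemma sqdist_shift (R : realType) n (z m : Rn R n) (j : 'I_n) (t : R) :
  sqdist (Defs.shift z j t) m = ((tnth z j : R) - tnth m j + t)^+2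
     + \sum_(i < n | i != j) ((tnth z i : R) - tnth m i)^+2.
Proof.
rewrite /sqdist (bigD1 j) //= tnth_mktuple eqxx; congr (_ + _).
  by congr (_ ^+ 2); rewrite addrAC.
by apply: eq_bigr => i /negPf Hi; rewrite tnth_mktuple Hi.
Qed.

Lemma gauss_derive (R : realType) n (m z : Rn R n) (v : R) (j : 'I_n) :
  is_derive (0:R) 1 (fun t => gauss m v (Defs.shift z j t))
    (gauss m v z * (- ((tnth z j : R) - tnth m j) / v)).
Proof.
set a := (tnth z j : R) - tnth m j.
set C := \sum_(i < n | i != j) ((tnth z i : R) - tnth m i)^+2.
have E : (fun t => gauss m v (Defs.shift z j t)) =
   (fun t => (Num.sqrt (2 * pi * v)) ^- n * expR ((2 * v)^-1 * - ((a + t)^+2 + C))).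
  apply: boolp.funext => t. by rewrite /gauss sqdist_shift [X in expR X]mulrC.
rewrite E. have := @der_quad _ a C (2 * v)^-1 (Num.sqrt (2 * pi * v) ^- n). move=> H. apply: (is_derive_eq H).
have Ez : gauss m v z = (Num.sqrt (2 * pi * v)) ^- n * expR ((2 * v)^-1 * - (a^+2 + C)).
  have -> : z = Defs.shift z j 0.
    apply: eq_from_tnth => i; rewrite tnth_mktuple; case: eqP => // ->; by rewrite addr0.
  rewrite /gauss sqdist_shift [X in expR X]mulrC addr0.
  by [].
rewrite Ez -!mulrA; congr (_ * (_ * _)).
by rewrite mulrN mulNr invfM mulrACA mulVf ?pnatr_eq0 // mul1r mulrC.
Qed.
Lemma dx_integrand (R : realType) nx nk (ax ak : R) (y0 : Rn R nx * Rn R nk) (P : R)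
   (xi : Rn R nx) (ki : Rn R nk) (j : 'I_nx) :
  dx (fun y => fwd_joint ax ak y y0 * P) (xi, ki) j =
  score_x ax y0 (xi, ki) j * (fwd_joint ax ak (xi, ki) y0 * P).
Proof.
rewrite /dx /fwd_joint /fwd /=.
set A := gauss (scale_tuple (Num.sqrt ak) y0.2) (1 - ak) ki.
set m := scale_tuple (Num.sqrt ax) y0.1.
have H := is_deriveZ (A * P) (@gauss_derive _ _ m xi (1 - ax) j).
rewrite (_ : (fun t => gauss m (1 - ax) (Defs.shift xi j t) * A * P) =
   (fun t => (A * P) * gauss m (1 - ax) (Defs.shift xi j t))); last first.
  apply: boolp.funext => t /=; ring.
rewrite (derive1_of _ _ _ _ H) /score_x /= /m tnth_mktuple.
rewrite -[_ *: _]/(_ * _).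
ring.
Qed.

Lemma dk_integrand (R : realType) nx nk (ax ak : R) (y0 : Rn R nx * Rn R nk) (P : R)
   (xi : Rn R nx) (ki : Rn R nk) (j : 'I_nk) :
  dk (fun y => fwd_joint ax ak y y0 * P) (xi, ki) j =
  score_k ak y0 (xi, ki) j * (fwd_joint ax ak (xi, ki) y0 * P).
Proof.
rewrite /dk /fwd_joint /fwd /=.
set A := gauss (scale_tuple (Num.sqrt ax) y0.1) (1 - ax) xi.
set m := scale_tuple (Num.sqrt ak) y0.2.
have H := is_deriveZ (A * P) (@gauss_derive _ _ m ki (1 - ak) j).
rewrite (_ : (fun t => A * gauss m (1 - ak) (Defs.shift ki j t) * P) =
   (fun t => (A * P) * gauss m (1 - ak) (Defs.shift ki j t))); last first.
  apply: boolp.funext => t /=; ring.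
rewrite (derive1_of _ _ _ _ H) /score_k /= /m tnth_mktuple.
rewrite -[_ *: _]/(_ * _).
ring.
Qed.
Lemma gauss_ge0 (R : realType) n (m z : Rn R n) (v : R) : 0 <= gauss m v z.
Proof. by rewrite /gauss mulr_ge0 // ?invr_ge0 ?exprn_ge0 ?sqrtr_ge0 // expR_ge0. Qed.

Theorem theorem1 (R : realType) (nx nk : nat)
    (px0 : Rn R nx -> R) (pk0 : Rn R nk -> R) (V : Rn R nx -> Rn R nk -> R)
    (ax ak : R) (xi : Rn R nx) (ki : Rn R nk) :
  (* p^x_0 and p^k_0 are probability densities (w.r.t. Lebesgue measure) *)
  measurable_fun setT px0 -> (forall x, 0 <= px0 x) ->
  (\int[@lebesgue_n R nx]_x (px0 x)%:E = 1)%E ->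
  measurable_fun setT pk0 -> (forall k, 0 <= pk0 k) ->
  (\int[@lebesgue_n R nk]_k (pk0 k)%:E = 1)%E ->
  (* V is a measurable nonnegative interaction potential with Z in (0, oo) *)
  measurable_fun setT (fun y : Rn R nx * Rn R nk => V y.1 y.2) ->
  (forall x k, 0 <= V x k) ->
  (0 < Zc px0 pk0 V < +oo)%E ->
  (* noise levels *)
  0 < ax < 1 -> 0 < ak < 1 ->
  let yi := (xi, ki) in
  let pi := p_i px0 pk0 V ax ak in
  let integrand := fun y0 y => fwd_joint ax ak y y0 * p0 px0 pk0 V y0 in
  (* the integrals defining p_i(y_i) and p^x_i(x_i) are finite *)
  (@lebesgue_joint R nx nk).-integrable setT (fun y0 => (integrand y0 yi)%:E) ->
  (@lebesgue_n R nx).-integrable setT (fun x0 => (fwd ax xi x0 * px0 x0)%:E) ->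
  (* 0 < E_q[V p^k_0] < oo *)
  (0 < \int[@lebesgue_joint R nx nk]_y0 (q px0 ax ak y0 yi * wVk pk0 V y0)%:E
     < +oo)%E ->
  (* E_q[s V p^k_0] is finite (each component) *)
  (forall j : 'I_nx, (@lebesgue_joint R nx nk).-integrable setT
     (fun y0 => (q px0 ax ak y0 yi * (score_x ax y0 yi j * wVk pk0 V y0))%:E)) ->
  (forall j : 'I_nk, (@lebesgue_joint R nx nk).-integrable setT
     (fun y0 => (q px0 ax ak y0 yi * (score_k ak y0 yi j * wVk pk0 V y0))%:E)) ->
  (* differentiation under the integral sign w.r.t. y_i is permitted *)
  (forall j : 'I_nx,
     derivable_x pi yi j /\
     (@lebesgue_joint R nx nk).-integrable setT
        (fun y0 => (dx (integrand y0) yi j)%:E) /\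
     dx pi yi j = Rinteg (@lebesgue_joint R nx nk) (fun y0 => dx (integrand y0) yi j)) ->
  (forall j : 'I_nk,
     derivable_k pi yi j /\
     (@lebesgue_joint R nx nk).-integrable setT
        (fun y0 => (dk (integrand y0) yi j)%:E) /\
     dk pi yi j = Rinteg (@lebesgue_joint R nx nk) (fun y0 => dk (integrand y0) yi j)) ->
  (* conclusion: the score of p_i, blockwise and componentwise *)
  (forall j : 'I_nx,
     derivable_x (fun y => ln (pi y)) yi j /\
     dx (fun y => ln (pi y)) yi j =
       Eq_q px0 ax ak yi (fun y0 => score_x ax y0 yi j * wVk pk0 V y0)
       / Eq_q px0 ax ak yi (wVk pk0 V)) /\
  (forall j : 'I_nk,
     derivable_k (fun y => ln (pi y)) yi j /\
     dk (fun y => ln (pi y)) yi j =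
       Eq_q px0 ax ak yi (fun y0 => score_k ak y0 yi j * wVk pk0 V y0)
       / Eq_q px0 ax ak yi (wVk pk0 V)).
Proof.
move=> Hpx0m Hpx0 Hpx1 Hpk0m Hpk0 Hpk1 HVm HV HZ Hax Hak yi pi integrand
  Hint Hintx HEq Hsx Hsk Hdx Hdk.
pose pxi := px_i px0 ax xi.
pose Z := fine (Zc px0 pk0 V).
pose s := Num.sqrt ak.
pose c := s ^+ nk * Z / pxi.
have HZ0 : 0 < Z by apply: fine_gt0.
have Hs0 : 0 < s by rewrite sqrtr_gt0; case/andP: Hak.
have Hpxi_ge0 : 0 <= pxi.
  rewrite /pxi /px_i /Rinteg; apply: fine_ge0; apply: integral_ge0_gen.
    exact: lebesgue_n0.
  by move=> x; rewrite lee_fin mulr_ge0 // gauss_ge0.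
have Hpxi_ne0 : pxi != 0.
  apply/negP => /eqP E0.
  have Hf : (fun y0 => (q px0 ax ak y0 yi * wVk pk0 V y0)%:E) = (fun _ => (0:R)%:E).
    by apply: boolp.funext => y0; rewrite /q /px_post -/pxi E0 invr0 mulr0 !mul0r.
  have I2 : (\int[@lebesgue_joint R nx nk]_y0 (0:R)%:E =
             2%:E * \int[@lebesgue_joint R nx nk]_y0 (0:R)%:E)%E.
    rewrite -integral_pscale //; congr (integral _ _ _).
    by apply: boolp.funext => y0; rewrite mule0.
  move: HEq; rewrite Hf; move: I2.
  case: (\int[@lebesgue_joint R nx nk]_y0 (0:R)%:E)%E => [r| |] //=.
  - move=> /eqP; rewrite -EFinM eqe => /eqP Hr /andP [h1 _].
    move: h1; rewrite lte_fin => h1; clear -Hr h1; lra.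
  - by move=> _ /andP [_]; rewrite ltxx.
have Hpxi : 0 < pxi by rewrite lt_neqAle eq_sym Hpxi_ne0.
have Hc : 0 < c by rewrite /c divr_gt0 // mulr_gt0 // exprn_gt0.
have Kq : forall y0, q px0 ax ak y0 yi * wVk pk0 V y0 = c * integrand y0 yi.
  move=> y0; rewrite /q /px_post /wVk /integrand /fwd_joint /p0 /= qk_fwd //.
  rewrite -/pxi -/Z /c -/s.
  field.
  by rewrite Hpxi_ne0 gt_eqF.
have HEqw : Eq_q px0 ax ak yi (wVk pk0 V) = c * pi yi.
  rewrite /Eq_q (_ : (fun y0 => q px0 ax ak y0 yi * wVk pk0 V y0) =
                     (fun y0 => c * integrand y0 yi)); last first.
    by apply: boolp.funext => y0; exact: Kq.
  by rewrite Rinteg_pscale.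
have HEqpos : 0 < Eq_q px0 ax ak yi (wVk pk0 V) by apply: fine_gt0.
have Hpipos : 0 < pi yi.
  by move: HEqpos; rewrite HEqw pmulr_rgt0.
have HEqs : forall g : Rn R nx * Rn R nk -> R,
   Eq_q px0 ax ak yi (fun y0 => g y0 * wVk pk0 V y0) =
   c * Rinteg (@lebesgue_joint R nx nk) (fun y0 => g y0 * integrand y0 yi).
  move=> g; rewrite /Eq_q (_ : (fun y0 => q px0 ax ak y0 yi * (g y0 * wVk pk0 V y0)) =
                     (fun y0 => c * (g y0 * integrand y0 yi))); last first.
    by apply: boolp.funext => y0; rewrite mulrCA Kq mulrCA.
  by rewrite Rinteg_pscale.
have Hcn0 : c != 0 by rewrite gt_eqF.
have Hpin0 : pi yi != 0 by rewrite gt_eqF.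
split.
- move=> j; have [Hder [_ Hval]] := Hdx j.
  rewrite /derivable_x /dx /= in Hder Hval *.
  have Hf0 : pi (Defs.shift xi j 0, ki) = pi yi by rewrite shift0.
  have [Hl1 Hl2] := ln_derive _ _ Hder (ltac:(by rewrite /= Hf0)).
  split; first exact: Hl1.
  rewrite Hl2 Hval Hf0 HEqs HEqw.
  rewrite (_ : (fun y0 => derive1 (fun t => integrand y0 (Defs.shift xi j t, ki)) 0) =
               (fun y0 => score_x ax y0 yi j * integrand y0 yi)); last first.
    apply: boolp.funext => y0.
    move: (dx_integrand _ _ _ ax ak y0 (p0 px0 pk0 V y0) xi ki j); rewrite /dx /=; exact.
  by rewrite -mulf_div divff // mul1r.
- move=> j; have [Hder [_ Hval]] := Hdk j.
  rewrite /derivable_k /dk /= in Hder Hval *.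
  have Hf0 : pi (xi, Defs.shift ki j 0) = pi yi by rewrite shift0.
  have [Hl1 Hl2] := ln_derive _ _ Hder (ltac:(by rewrite /= Hf0)).
  split; first exact: Hl1.
  rewrite Hl2 Hval Hf0 HEqs HEqw.
  rewrite (_ : (fun y0 => derive1 (fun t => integrand y0 (xi, Defs.shift ki j t)) 0) =
               (fun y0 => score_k ak y0 yi j * integrand y0 yi)); last first.
    apply: boolp.funext => y0.
    move: (dk_integrand _ _ _ ax ak y0 (p0 px0 pk0 V y0) xi ki j); rewrite /dk /=; exact.
  by rewrite -mulf_div divff // mul1r.
Qed.
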